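(* Let $p$ be a prime and let $\alpha\in\mathbf{Bad}$ with $\alpha>0$. Suppose there is a sequence of natural numbers $\{\ell_m\}_{m\in\mathbb{N}}$ such that $p^{\ell_m}\alpha$ is not an infinite loop mod $p^m$ for every $m\in\mathbb{N}$. Then $m_p(\alpha)=0$.
   Context: $\mathbf{Bad}=\{\alpha\in\mathbb{R}:\inf_{q\in\mathbb{N}}q\|q\alpha\|>0\}$, $\|x\|$ the distance to the nearest integer; $m_p(\alpha)=\inf_{q\in\mathbb{N}} q\,|q|_p\,\|q\alpha\|$ with $|\cdot|_p$ the $p$-adic absolute value. For $\alpha$ with continued fraction $[a_0;a_1,\ldots]$ and convergent denominators $q_{-1}=0,q_0=1,q_k=a_kq_{k-1}+q_{k-2}$, the semi-convergent denominators are $mq_k+q_{k-1}$ for $0\le m\le a_{k+1}$. A real $\alpha>0$ is an \emph{infinite loop mod $n$} if none of its semi-convergent denominators is divisible by $n$, except $q_{-1}=0$. *)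

(* Defs.v *)
From HB Require Import structures.
From mathcomp Require Import all_boot all_order all_algebra.
From mathcomp Require Import all_classical all_reals.
Set Implicit Arguments. Unset Strict Implicit. Unset Printing Implicit Defensive.
Import Order.TTheory GRing.Theory Num.Theory.
Local Open Scope classical_set_scope.
Local Open Scope ring_scope.

Definition dist_int {R : realType} (x : R) : R :=
  Num.min (x - (Num.floor x)%:~R) ((Num.floor x + 1)%:~R - x).

Definition padic_abs {R : realType} (p q : nat) : R := ((p ^ logn p q)%:R)^-1.

Definition Bad {R : realType} (alpha : R) : Prop :=
  0 < inf [set (q%:R * dist_int (q%:R * alpha)) | q in [set q : nat | (0 < q)%N]].

Definition m_p {R : realType} (p : nat) (alpha : R) : R :=
  inf [set (q%:R * padic_abs p q * dist_int (q%:R * alpha))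
       | q in [set q : nat | (0 < q)%N]].

(* Complete quotients x_k via the Gauss map: x_0 = alpha,
   x_{k+1} = 1/(x_k - a_k); partial quotients a_k = floor x_k.
   (If the expansion terminates, 0^-1 = 0 gives a_j = 0 afterwards.) *)
Fixpoint cf_x {R : realType} (alpha : R) (k : nat) : R :=
  match k with
  | 0 => alpha
  | k'.+1 => (cf_x alpha k' - (Num.floor (cf_x alpha k'))%:~R)^-1
  end.

Definition cf_a {R : realType} (alpha : R) (k : nat) : int :=
  Num.floor (cf_x alpha k).

(* cf_qpair alpha k = (q_{k-1}, q_k), with q_{-1} = 0, q_0 = 1,
   q_k = a_k q_{k-1} + q_{k-2}. *)
Fixpoint cf_qpair {R : realType} (alpha : R) (k : nat) : int * int :=
  match k with
  | 0 => (0, 1)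
  | k'.+1 => let: (qm, q) := cf_qpair alpha k' in (q, cf_a alpha k'.+1 * q + qm)
  end.

Definition cf_q {R : realType} (alpha : R) (k : nat) : int := (cf_qpair alpha k).2.
Definition cf_qprev {R : realType} (alpha : R) (k : nat) : int := (cf_qpair alpha k).1.

Definition semiconv_denom {R : realType} (alpha : R) (d : int) : Prop :=
  exists (k m : nat), (m%:Z <= cf_a alpha k.+1) /\
                      d = m%:Z * cf_q alpha k + cf_qprev alpha k.

(* alpha > 0 is an infinite loop mod n if no semi-convergent denominator
   other than q_{-1} = 0 is divisible by n *)
Definition infinite_loop_mod {R : realType} (alpha : R) (n : nat) : Prop :=
  0 < alpha /\
  forall d : int, semiconv_denom alpha d -> d != 0 -> ~~ (n%:Z %| d)%Z.

(* Main.v *)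
Require Import Defs.
From HB Require Import structures.
From mathcomp Require Import all_boot all_order all_algebra.
From mathcomp Require Import all_classical all_reals.
From mathcomp Require Import ring lra zify.
Import Order.TTheory GRing.Theory Num.Theory.
Local Open Scope ring_scope.

Lemma dist_int_ge0 {R : realType} (x : R) : 0 <= dist_int x.
Proof.
rewrite /dist_int; have := floor_itv x => /andP[h1 h2].
rewrite le_min; apply/andP; split; lra.
Qed.

Lemma dist_int_le {R : realType} (x : R) (n : int) : dist_int x <= `|x - n%:~R|.
Proof.
rewrite /dist_int; have := floor_itv x => /andP[h1 h2].
case: (lerP n (Num.floor x)) => hn.
  have hn' : n%:~R <= (Num.floor x)%:~R :> R by rewrite ler_int.
  rewrite ger0_norm; last lra.
  rewrite ge_min; apply/orP; left; lra.
have hn' : (Num.floor x + 1)%:~R <= n%:~R :> R by rewrite ler_int; lia.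
rewrite ler0_norm; last lra.
rewrite ge_min; apply/orP; right; lra.
Qed.

Lemma dist_int_int {R : realType} (n : int) : dist_int (n%:~R : R) = 0.
Proof.
apply/eqP; rewrite eq_le dist_int_ge0 andbT.
by have := @dist_int_le R (n%:~R) n; rewrite subrr normr0.
Qed.
Fixpoint cf_ppair {R : realType} (b : R) (k : nat) : int * int :=
  match k with
  | 0 => (1, cf_a b 0)
  | k'.+1 => let: (pm, pp) := cf_ppair b k' in (pp, cf_a b k'.+1 * pp + pm)
  end.
Definition cfp {R : realType} (b : R) k := (cf_ppair b k).2.
Definition cfpp {R : realType} (b : R) k := (cf_ppair b k).1.
Definition DD {R : realType} (b : R) k : R := (cf_q b k)%:~R * b - (cfp b k)%:~R.
Definition Dm {R : realType} (b : R) k : R := (cf_qprev b k)%:~R * b - (cfpp b k)%:~R.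
Definition fr {R : realType} (b : R) k : R := cf_x b k - (cf_a b k)%:~R.

Lemma qS {R : realType} (b : R) k :
  cf_q b k.+1 = cf_a b k.+1 * cf_q b k + cf_qprev b k /\ cf_qprev b k.+1 = cf_q b k.
Proof. by rewrite /cf_q /cf_qprev /=; case: (cf_qpair b k). Qed.

Lemma pS {R : realType} (b : R) k :
  cfp b k.+1 = cf_a b k.+1 * cfp b k + cfpp b k /\ cfpp b k.+1 = cfp b k.
Proof. by rewrite /cfp /cfpp /=; case: (cf_ppair b k). Qed.

Lemma DS {R : realType} (b : R) k :
  DD b k.+1 = (cf_a b k.+1)%:~R * DD b k + Dm b k /\ Dm b k.+1 = DD b k.
Proof.
rewrite /DD /Dm; have [-> ->] := qS b k; have [-> ->] := pS b k; split => //.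
rewrite !rmorphD !rmorphM /=; ring.
Qed.

Lemma Wint {R : realType} (b : R) k :
  `|cf_qprev b k * cfp b k - cf_q b k * cfpp b k| = 1.
Proof.
elim: k => [|k IH]; first by rewrite /cf_qprev /cf_q /cfp /cfpp /=; rewrite mul0r sub0r mul1r normrN.
have [-> ->] := qS b k; have [-> ->] := pS b k.
rewrite -IH -normrN; congr `|_|; ring.
Qed.

Lemma WR {R : realType} (b : R) k :
  (cf_q b k)%:~R * Dm b k - (cf_qprev b k)%:~R * DD b k
  = ((cf_qprev b k * cfp b k - cf_q b k * cfpp b k)%:~R : R).
Proof. rewrite /DD /Dm rmorphB !rmorphM /=; ring. Qed.

Lemma fr_ge0 {R : realType} (b : R) k : 0 <= fr b k.
Proof. rewrite /fr /cf_a; have := floor_itv (cf_x b k) => /andP[h1 h2]; lra. Qed.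

Lemma fr_lt1 {R : realType} (b : R) k : fr b k < 1.
Proof.
rewrite /fr /cf_a; have := floor_itv (cf_x b k) => /andP[h1 h2].
move: h2; rewrite rmorphD /=; lra.
Qed.

Lemma xS {R : realType} (b : R) k : cf_x b k.+1 = (fr b k)^-1.
Proof. by []. Qed.

Definition irrat {R : realType} (b : R) :=
  forall (Q P : int), 0 < Q -> Q%:~R * b != P%:~R.

Lemma Sinv {R : realType} (b : R) k : irrat b ->
  [/\ DD b k = - Dm b k * fr b k, 1 <= cf_q b k, 0 <= cf_qprev b k & fr b k != 0].
Proof.
move=> Hi.
have fin : forall j, DD b j = - Dm b j * fr b j -> 1 <= cf_q b j -> fr b j != 0.
  move=> j h1 h2; apply/negP => /eqP h3.
  move: h1; rewrite h3 mulr0 /DD => /eqP; rewrite subr_eq0.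
  by apply/negP; apply: Hi; lia.
elim: k => [|k [IH1 IH2 IH3 IH4]].
  have h1 : DD b 0 = - Dm b 0 * fr b 0.
    rewrite /DD /Dm /fr /cf_q /cf_qprev /cfp /cfpp /= /cf_a /=.
    idtac.
    ring.
  have h2 : 1 <= cf_q b 0 by [].
  by split => //; exact: fin.
have fpos : 0 < fr b k by rewrite lt_neqAle eq_sym IH4 fr_ge0.
have f1 := fr_lt1 b k.
have X1 : 1 <= cf_x b k.+1.
  by rewrite xS -[1]invr1 lef_pV2 ?posrE //; lra.
have a1 : 1 <= cf_a b k.+1 by rewrite /cf_a floor_ge_int.
have [qe pe] := qS b k; have [De Dme] := DS b k.
have h1 : DD b k.+1 = - Dm b k.+1 * fr b k.+1.
  rewrite De Dme /fr.
  have -> : Dm b k = - DD b k * cf_x b k.+1.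
    by rewrite IH1 xS !mulNr opprK -mulrA mulfV ?mulr1.
  ring.
have h2 : 1 <= cf_q b k.+1 by rewrite qe; nia.
split => //; [by rewrite pe; lia | exact: fin].
Qed.

Lemma intrn {R : numDomainType} (n : nat) : (n%:Z)%:~R = n%:R :> R.
Proof. by []. Qed.

Lemma CFkey {R : realType} (b : R) k : irrat b ->
  [/\ 1 <= cf_x b k.+1,
      `|DD b k| * ((cf_q b k)%:~R * cf_x b k.+1 + (cf_qprev b k)%:~R) = 1,
      Dm b k = - DD b k * cf_x b k.+1, 1 <= cf_q b k & 0 <= cf_qprev b k].
Proof.
move=> Hi; have [IH1 IH2 IH3 IH4] := Sinv b k Hi.
have fpos : 0 < fr b k by rewrite lt_neqAle eq_sym IH4 fr_ge0.
have f1 := fr_lt1 b k.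
have X1 : 1 <= cf_x b k.+1.
  by rewrite xS -[1]invr1 lef_pV2 ?posrE //; lra.
have Dme : Dm b k = - DD b k * cf_x b k.+1.
  by rewrite IH1 xS !mulNr opprK -mulrA mulfV ?mulr1.
split => //.
have := WR b k; rewrite Dme => hW.
have q0 : (1 : R) <= (cf_q b k)%:~R by rewrite ler1z.
have qp0 : (0 : R) <= (cf_qprev b k)%:~R by rewrite ler0z.
have pos : 0 <= (cf_q b k)%:~R * cf_x b k.+1 + (cf_qprev b k)%:~R :> R by nra.
rewrite -(ger0_norm pos) -normrM.
have -> : DD b k * ((cf_q b k)%:~R * cf_x b k.+1 + (cf_qprev b k)%:~R) =
   - ((cf_q b k)%:~R * (- DD b k * cf_x b k.+1) - (cf_qprev b k)%:~R * DD b k) by ring.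
by rewrite hW normrN -intr_norm Wint.
Qed.

Lemma boundA {R : realType} (b : R) k : irrat b ->
  (cf_q b k)%:~R * dist_int ((cf_q b k)%:~R * b) <= (cf_x b k.+1)^-1.
Proof.
move=> Hi; have [X1 key _ q1 qp0] := CFkey b k Hi.
have hd := dist_int_le ((cf_q b k)%:~R * b) (cfp b k).
have q0 : (1 : R) <= (cf_q b k)%:~R by rewrite ler1z.
have qp0' : (0 : R) <= (cf_qprev b k)%:~R by rewrite ler0z.
have hD : `|(cf_q b k)%:~R * b - (cfp b k)%:~R| = `|DD b k| by [].
rewrite hD in hd.
have nD := normr_ge0 (DD b k).
rewrite -[_^-1]mul1r ler_pdivlMr; last lra.
have dpos := dist_int_ge0 ((cf_q b k)%:~R * b).
set dd := dist_int _ in hd dpos *.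
set X := cf_x b k.+1 in X1 key *.
set N := `|DD b k| in key hd nD *.
set Q := (cf_q b k)%:~R in key q0 *.
set Qp := (cf_qprev b k)%:~R in key qp0' *.
have h1 : Q * dd * X <= Q * N * X.
  by apply: ler_wpM2r; [lra | apply: ler_wpM2l; lra].
nra.
Qed.

Lemma boundB {R : realType} (b : R) k (j : nat) : irrat b ->
  j%:Z <= cf_a b k.+1 ->
  0 <= j%:Z * cf_q b k + cf_qprev b k /\
  ((j%:Z * cf_q b k + cf_qprev b k)%:~R) *
     dist_int (((j%:Z * cf_q b k + cf_qprev b k)%:~R) * b) <= cf_x b k.+1.
Proof.
move=> Hi hj; have [X1 key Dme q1 qp0] := CFkey b k Hi.
split; first by nia.
have ja : (j%:R : R) <= cf_x b k.+1.
  apply: le_trans (floor_le _).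
  by rewrite -intrn ler_int.
have hd := dist_int_le (((j%:Z * cf_q b k + cf_qprev b k)%:~R) * b)
                       (j%:Z * cfp b k + cfpp b k).
have E : ((j%:Z * cf_q b k + cf_qprev b k)%:~R) * b
     - (j%:Z * cfp b k + cfpp b k)%:~R = j%:R * DD b k + Dm b k :> R.
  rewrite /DD /Dm !rmorphD !rmorphM /= intrn; ring.
rewrite E in hd.
rewrite Dme in hd.
have Ed : (j%:Z * cf_q b k + cf_qprev b k)%:~R = j%:R * (cf_q b k)%:~R + (cf_qprev b k)%:~R :> R.
  by rewrite rmorphD rmorphM /= intrn.
rewrite Ed in hd *.
have q0 : (1 : R) <= (cf_q b k)%:~R by rewrite ler1z.
have qp0' : (0 : R) <= (cf_qprev b k)%:~R by rewrite ler0z.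
have j0 : (0 : R) <= j%:R by [].
have e : j%:R * DD b k + - DD b k * cf_x b k.+1 = DD b k * (j%:R - cf_x b k.+1) by ring.
rewrite e normrM (ler0_norm (x := j%:R - _)) in hd; last lra.
have nD := normr_ge0 (DD b k).
have dpos := dist_int_ge0 ((j%:R * (cf_q b k)%:~R + (cf_qprev b k)%:~R) * b).
set dd := dist_int _ in hd dpos *.
set X := cf_x b k.+1 in X1 key ja hd e *.
set N := `|DD b k| in key hd nD *.
set Q := (cf_q b k)%:~R in key q0 *.
set Qp := (cf_qprev b k)%:~R in key qp0' *.
have hd2 : N * - (j%:R - X) <= N * X by apply: ler_wpM2l => //; lra.
have hdd : dd <= N * X := le_trans hd hd2.
have jq : 0 <= j%:R * Q + Qp by nra.
have h1 : (j%:R * Q + Qp) * dd <= (j%:R * Q + Qp) * (N * X) by apply: ler_wpM2l.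
have jqX : j%:R * Q + Qp <= Q * X + Qp by nra.
have NX : 0 <= N * X by apply: mulr_ge0 => //; lra.
have h2 : (j%:R * Q + Qp) * (N * X) <= (Q * X + Qp) * (N * X) by apply: ler_wpM2r.
have h3 : (Q * X + Qp) * (N * X) = X by rewrite mulrA (mulrC _ N) key mul1r.
lra.
Qed.

Lemma padic_ge0 {R : realType} p q : 0 <= (padic_abs p q : R).
Proof. by rewrite /padic_abs invr_ge0. Qed.

Lemma mp_lb {R : realType} p (alpha : R) :
  has_lbound [set (q%:R * padic_abs p q * dist_int (q%:R * alpha))
       | q in [set q : nat | (0 < q)%N]].
Proof.
exists 0 => x [q _ <-].
by apply: mulr_ge0; [apply: mulr_ge0 => //; apply: padic_ge0 | apply: dist_int_ge0].
Qed.

Lemma bad_lb {R : realType} (alpha : R) :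
  has_lbound [set (q%:R * dist_int (q%:R * alpha))
       | q in [set q : nat | (0 < q)%N]].
Proof.
exists 0 => x [q _ <-].
by apply: mulr_ge0 => //; apply: dist_int_ge0.
Qed.

Lemma bad_irrat {R : realType} (alpha : R) (r : nat) :
  Bad alpha -> (0 < r)%N -> irrat (r%:R * alpha).
Proof.
move=> hB hr Q P hQ; apply/negP => /eqP hE.
move: hB; rewrite /Bad; apply/negP; rewrite -leNgt.
have hQn : (0 < `|Q|%N * r)%N by rewrite muln_gt0 hr absz_gt0 andbT; lia.
have hv : (((`|Q|%N * r)%:R : R) * dist_int ((`|Q|%N * r)%:R * alpha)) = 0.
  have -> : ((`|Q|%N * r)%:R : R) * alpha = P%:~R.
    rewrite natrM natr_absz ger0_norm; last lia.
    by rewrite -mulrA.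
  by rewrite dist_int_int mulr0.
rewrite -hv; apply: (ge_inf (bad_lb alpha)).
by exists (`|Q|%N * r)%N.
Qed.

Lemma Vval {R : realType} (p l n : nat) (alpha : R) : prime p -> (0 < n)%N ->
  (n * p ^ l)%:R * padic_abs p (n * p ^ l) * dist_int ((n * p ^ l)%:R * alpha)
  = n%:R * dist_int (n%:R * ((p ^ l)%:R * alpha)) / (p ^ logn p n)%:R.
Proof.
move=> hp hn; have p0 : (0 < p)%N := prime_gt0 hp.
rewrite /padic_abs lognM ?expn_gt0 ?p0 // pfactorK // expnD !natrM.
have h1 : ((p ^ l)%:R : R) != 0 by rewrite pnatr_eq0 -lt0n expn_gt0 p0.
have h2 : ((p ^ logn p n)%:R : R) != 0 by rewrite pnatr_eq0 -lt0n expn_gt0 p0.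
rewrite [n%:R * (_ * alpha)]mulrA.
by field; rewrite h1 h2.
Qed.

Lemma small {R : realType} {p : nat} {alpha : R} {ell : nat -> nat} :
  prime p -> Bad alpha -> 0 < alpha ->
  (forall m : nat, (0 < m)%N ->
     ~ infinite_loop_mod ((p ^ ell m)%:R * alpha) (p ^ m)) ->
  forall e : R, 0 < e -> exists n : nat, (0 < n)%N /\
    n%:R * padic_abs p n * dist_int (n%:R * alpha) < e.
Proof.
move=> hp hB ha hL e he.
have p0 : (0 < p)%N := prime_gt0 hp.
have p1 : (1 < p)%N := prime_gt1 hp.
set c := Num.ceil (e^-1 * e^-1).
have c0 : 0 <= c.
  rewrite /c ceil_ge0.
  have h : 0 <= e^-1 * e^-1 by apply: mulr_ge0; rewrite invr_ge0; lra.
  lra.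
set m := (`|c|%N).+1.
have hm : (0 < m)%N by [].
have hpm : e^-1 * e^-1 < (p ^ m)%:R.
  apply: (le_lt_trans (ceil_ge _)); rewrite -/c.
  have -> : c%:~R = (`|c|%N)%:R :> R by rewrite natr_absz ger0_norm.
  rewrite ltr_nat; apply: leq_trans (ltn_expl m p1); by [].
set l := ell m.
set b := (p ^ l)%:R * alpha.
have hi : irrat b by apply: bad_irrat => //; rewrite expn_gt0 p0.
have hb : 0 < b by apply: mulr_gt0 => //; rewrite ltr0n expn_gt0 p0.
have [d [hs [hd0 hdv]]] : exists d, semiconv_denom b d /\ d != 0 /\ ((p ^ m)%:Z %| d)%Z.
  apply: contrapT => hno; apply: (hL m hm); split => // d hs hd.
  apply/negP => hdv; apply: hno; by exists d.
case: hs => k [j [hj hdE]].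
have [X1 key _ q1 qp0] := CFkey b k hi.
have hA := boundA b k hi.
have [d0 hBd] := boundB b k j hi hj.
rewrite -hdE in d0 hBd.
set X := cf_x b k.+1 in X1 key hA hBd.
have X0 : 0 < X by lra.
case: (ltrP X^-1 e) => hX.
  exists (`|cf_q b k|%N * p ^ l)%N.
  have qn : (0 < `|cf_q b k|%N)%N by rewrite absz_gt0; lia.
  split; first by rewrite muln_gt0 qn expn_gt0 p0.
  rewrite Vval //.
  have -> : ((`|cf_q b k|%N)%:R : R) = (cf_q b k)%:~R by rewrite natr_absz ger0_norm //; lia.
  rewrite -/b.
  have hpa : (1 : R) <= (p ^ logn p `|cf_q b k|)%:R by rewrite ler1n expn_gt0 p0.
  apply: (le_lt_trans _ hX); apply: (le_trans _ hA).
  rewrite ler_pdivrMr; last lra.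
  have h2 := dist_int_ge0 ((cf_q b k)%:~R * b); have h1 : (1 : R) <= (cf_q b k)%:~R by rewrite ler1z.
  set u := dist_int _ in h2 *.
  rewrite -{1}[_ * u]mulr1; apply: ler_wpM2l => //.
  by apply: mulr_ge0 => //; lra.
exists (`|d|%N * p ^ l)%N.
have dn : (0 < `|d|%N)%N by rewrite absz_gt0.
split; first by rewrite muln_gt0 dn expn_gt0 p0.
have div : (p ^ m %| `|d|%N)%N by move: hdv; rewrite dvdzE absz_nat.
have ma : (m <= logn p `|d|)%N by rewrite -pfactor_dvdn.
rewrite Vval //.
have -> : ((`|d|%N)%:R : R) = d%:~R by rewrite natr_absz ger0_norm.
rewrite -/b.
have hP : ((p ^ m)%:R : R) <= (p ^ logn p `|d|)%:R by rewrite ler_nat leq_pexp2l.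
set v := _ * dist_int _ in hBd *.
set P := ((p ^ m)%:R : R) in hpm hP *.
set Pa := ((p ^ logn p `|d|)%:R : R) in hP *.
have Xe : X <= e^-1.
  rewrite -[e^-1]mul1r ler_pdivlMr //.
  have := ler_wpM2l (ltW X0) hX; rewrite mulfV; last by lra.
  by rewrite mulrC.
have ei : 0 < e^-1 by rewrite invr_gt0.
have ei2 : 0 <= e^-1 * e^-1 by apply: mulr_ge0; lra.
rewrite ltr_pdivrMr; last lra.
have h1 : e * (e^-1 * e^-1) = e^-1 by rewrite mulrA mulfV ?mul1r //; lra.
have h2 : e * (e^-1 * e^-1) < e * P by rewrite ltr_pM2l.
have h3 : e * P <= e * Pa by rewrite ler_pM2l.
lra.
Qed.

Theorem corollary3p4 (R : realType) (p : nat) (alpha : R) (ell : nat -> nat) :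
  prime p -> Bad alpha -> 0 < alpha ->
  (forall m : nat, (0 < m)%N ->
     ~ infinite_loop_mod ((p ^ ell m)%:R * alpha) (p ^ m)) ->
  m_p p alpha = 0.
Proof.
move=> hp hB ha hL.
have lb := mp_lb p alpha.
apply/eqP; rewrite eq_le; apply/andP; split; last first.
  apply: lb_le_inf.
    by exists (1%:R * padic_abs p 1 * dist_int (1%:R * alpha)); exists 1%N.
  move=> x [q _ <-].
  by apply: mulr_ge0; [apply: mulr_ge0 => //; apply: padic_ge0 | apply: dist_int_ge0].
rewrite leNgt; apply/negP => hpos.
have [n [hn hv]] := small (p:=p) hp hB ha hL _ hpos.
have := ge_inf lb; move=> /(_ (n%:R * padic_abs p n * dist_int (n%:R * alpha))) h.
have : m_p p alpha <= n%:R * padic_abs p n * dist_int (n%:R * alpha).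
  by apply: h; exists n.
rewrite /m_p in hv *; lra.
Qed.
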